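(* Let $W$ be the complement of the right-handed Whitehead link with its standard ideal triangulation $\mathcal{T}_W$ by four ideal tetrahedra $\sigma_0,\dots,\sigma_3$, and let normal $Q$-coordinates be ordered as $(q_0,q_0',q_0'',q_1,q_1',q_1'',q_2,q_2',q_2'',q_3,q_3',q_3'')\in\mathbb{R}^{12}$. Define linear functionals $$\nu(\mathcal{M}_0)=q_1-q_1''+q_2'-q_2''-q_3+q_3',\qquad \nu(\mathcal{L}_0^t)=-2q_1'+2q_1''-2q_2'+2q_2'',$$ $$\nu(\mathcal{M}_1)=q_0-q_0'-q_1'+q_1''-q_3+q_3'',\qquad \nu(\mathcal{L}_1^t)=-2q_0'+2q_0''-2q_2'+2q_2'',$$ and for $N\in\mathbb{R}^{12}$ let $\beta(N)=(\nu(\mathcal{L}_0^t)(N),-\nu(\mathcal{M}_0)(N),\nu(\mathcal{L}_1^t)(N),-\nu(\mathcal{M}_1)(N))$. Let $V_1,V_2,V_3,V_4\in\mathbb{R}^{12}$ be the vectors whose only nonzero coordinates are equal to $1$ and are, respectively, $\{q_0,q_2\}$, $\{q_1,q_2\}$, $\{q_1,q_3\}$, $\{q_0,q_3\}$. Let $S,S'$ be embedded spun-normal surfaces in $W$ with respect to $\mathcal{T}_W$, with normal $Q$-coordinates $N(S),N(S')$. If $N(S)$ is not a nonnegative linear combination of $V_1,V_2,V_3,V_4$ and $\beta(N(S))=\beta(N(S'))$, then $N(S)=N(S')$; that is, $S$ is uniquely determined (up to normal isotopy and adding or removing vertex-linking components) by its transversely oriented boundary curves.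
   Context: $\mathcal{T}_W$ is the four-tetrahedron ideal triangulation of $W$ obtained by subdividing an ideal octahedron (triangulation m129:#2 of Regina's cusped census); $W$ has two cusps, cusp 0 and cusp 1, with meridians $\mathcal{M}_i$ and null-homologous longitudes $\mathcal{L}_i^t$. A (spun-)normal surface meets each ideal tetrahedron in normal triangles and quadrilaterals, possibly infinitely many triangles near the cusps. For each tetrahedron $\sigma_i$ the three quadrilateral types are $q_i,q_i',q_i''$, separating its vertices as $01/23$, $03/12$, $02/13$ respectively; $N(S)(q)$ counts quadrilaterals of type $q$ in $S$. The normal $Q$-coordinates of embedded spun-normal surfaces are exactly the integer vectors $N\ge 0$ that are admissible (in each tetrahedron at most one of the three quadrilateral coordinates is nonzero) and satisfy the $Q$-matching equations, which for $\mathcal{T}_W$ are equivalent to $$0=q_0'-q_0''+q_1'-q_1''+q_2'-q_2''+q_3'-q_3'',\qquad 0=q_0-q_0'+q_1-q_1'-q_2+q_2'-q_3+q_3';$$ and $N(S)$ determines $S$ up to normal isotopy and adding or removing vertex-linking surfaces (normal surfaces made of triangles only). The vector $\beta(N(S))$ records the signed intersection numbers of $S$ with the peripheral curves, i.e.\ the transversely oriented boundary curves of $S$. The nonnegative combinations of $V_1,\dots,V_4$ projectivise to the ''centre square'' of the projective admissible solution space. *)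

(* Defs.v *)
From mathcomp Require Import all_boot all_order all_algebra.
From mathcomp Require Import reals.
Set Implicit Arguments. Unset Strict Implicit. Unset Printing Implicit Defensive.
Import Order.TTheory GRing.Theory Num.Theory.
Local Open Scope ring_scope.

Definition qI (k : nat) : 'I_12 := inord (3 * k).
Definition qI' (k : nat) : 'I_12 := inord (3 * k + 1).
Definition qI'' (k : nat) : 'I_12 := inord (3 * k + 2).

Section Coords.
Variable (T : Type).
Definition q (N : 'rV[T]_12) k := N ord0 (qI k).
Definition q' (N : 'rV[T]_12) k := N ord0 (qI' k).
Definition q'' (N : 'rV[T]_12) k := N ord0 (qI'' k).
End Coords.

Definition nuM0 (N : 'rV[int]_12) : int :=
  q N 1 - q'' N 1 + q' N 2 - q'' N 2 - q N 3 + q' N 3.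
Definition nuL0 (N : 'rV[int]_12) : int :=
  - 2 * q' N 1 + 2 * q'' N 1 - 2 * q' N 2 + 2 * q'' N 2.
Definition nuM1 (N : 'rV[int]_12) : int :=
  q N 0 - q' N 0 - q' N 1 + q'' N 1 - q N 3 + q'' N 3.
Definition nuL1 (N : 'rV[int]_12) : int :=
  - 2 * q' N 0 + 2 * q'' N 0 - 2 * q' N 2 + 2 * q'' N 2.

Definition beta (N : 'rV[int]_12) : int * int * int * int :=
  (nuL0 N, - nuM0 N, nuL1 N, - nuM1 N).

Definition admissible (N : 'rV[int]_12) : Prop :=
  forall k : 'I_4,
    [|| (q N k == 0) && (q' N k == 0),
        (q N k == 0) && (q'' N k == 0)
      | (q' N k == 0) && (q'' N k == 0)].

Definition Q_matching (N : 'rV[int]_12) : Prop :=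
  q' N 0 - q'' N 0 + q' N 1 - q'' N 1 + q' N 2 - q'' N 2 + q' N 3 - q'' N 3 = 0
  /\ q N 0 - q' N 0 + q N 1 - q' N 1 - q N 2 + q' N 2 - q N 3 + q' N 3 = 0.

(* Normal Q-coordinates of an embedded spun-normal surface in W w.r.t. T_W:
   nonnegative, admissible integer solutions of the Q-matching equations. *)
Definition spun_normal_Q (N : 'rV[int]_12) : Prop :=
  (forall i : 'I_12, 0 <= N ord0 i) /\ admissible N /\ Q_matching N.

(* V_1..V_4 (indexed 0..3): supports {q0,q2}, {q1,q2}, {q1,q3}, {q0,q3} *)
Definition Vsupp (j : 'I_4) : 'I_12 * 'I_12 :=
  match nat_of_ord j with
  | 0 => (qI 0, qI 2)
  | 1 => (qI 1, qI 2)
  | 2 => (qI 1, qI 3)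
  | _ => (qI 0, qI 3)
  end.

Definition V (R : nzRingType) (j : 'I_4) : 'rV[R]_12 :=
  \row_i (((i == (Vsupp j).1) || (i == (Vsupp j).2))%:R).

Definition in_centre_cone (R : realType) (N : 'rV[int]_12) : Prop :=
  exists a : 'I_4 -> R, (forall j, 0 <= a j) /\
    map_mx (fun z : int => z%:~R) N = \sum_(j < 4) a j *: V R j.

(* Main.v *)
Require Import Defs.
From mathcomp Require Import all_boot all_order all_algebra.
From mathcomp Require Import reals.
From mathcomp Require Import zify ssrZ.
From Stdlib Require Import ZArith Lia.
From mathcomp Require Import ring.
Import Order.TTheory GRing.Theory Num.Theory.

Section ZPart.
Local Open Scope Z_scope.
Definition adm (a b c : Z) := a = 0 /\ b = 0 \/ a = 0 /\ c = 0 \/ b = 0 /\ c = 0.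
Lemma tet (a b c x y z e : Z) : 0 <= a -> 0 <= b -> 0 <= c -> 0 <= x -> 0 <= y -> 0 <= z ->
  adm a b c -> adm x y z -> y - z = b - c + e -> 0 < e ->
  (a=0/\b=0/\x=0/\y=0/\ 0<c /\ 0<z) \/ (a=0/\b=0/\0<c/\y=0/\z=0) \/
  (a=0/\b=0/\0<c /\ x=0/\z=0/\0<y) \/ (b=0/\c=0/\x=0/\z=0/\0<y) \/
  (a=0/\c=0/\0<b/\x=0/\z=0/\0<y).
Proof. unfold adm; lia. Qed.

Lemma epos (a0 b0 c0 a1 b1 c1 a2 b2 c2 a3 b3 c3 x0 y0 z0 x1 y1 z1 x2 y2 z2 x3 y3 z3 e : Z) :
  0 <= a0 -> 0 <= b0 -> 0 <= c0 -> 0 <= a1 -> 0 <= b1 -> 0 <= c1 ->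
  0 <= a2 -> 0 <= b2 -> 0 <= c2 -> 0 <= a3 -> 0 <= b3 -> 0 <= c3 ->
  0 <= x0 -> 0 <= y0 -> 0 <= z0 -> 0 <= x1 -> 0 <= y1 -> 0 <= z1 ->
  0 <= x2 -> 0 <= y2 -> 0 <= z2 -> 0 <= x3 -> 0 <= y3 -> 0 <= z3 ->
  adm a0 b0 c0 -> adm a1 b1 c1 -> adm a2 b2 c2 -> adm a3 b3 c3 ->
  adm x0 y0 z0 -> adm x1 y1 z1 -> adm x2 y2 z2 -> adm x3 y3 z3 ->
  b0 - c0 + b1 - c1 + b2 - c2 + b3 - c3 = 0 ->
  a0 - b0 + a1 - b1 - a2 + b2 - a3 + b3 = 0 ->
  y0 - z0 + y1 - z1 + y2 - z2 + y3 - z3 = 0 ->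
  x0 - y0 + x1 - y1 - x2 + y2 - x3 + y3 = 0 ->
  y0 - z0 = b0 - c0 + e -> y1 - z1 = b1 - c1 + e ->
  b2 - c2 = y2 - z2 + e -> b3 - c3 = y3 - z3 + e -> 0 < e ->
  a1 - c1 + b2 - c2 - a3 + b3 = x1 - z1 + y2 - z2 - x3 + y3 ->
  a0 - b0 - b1 + c1 - a3 + c3 = x0 - y0 - y1 + z1 - x3 + z3 -> False.
Proof.
intros.
destruct (tet a0 b0 c0 x0 y0 z0 e) as [?|[?|[?|[?|?]]]]; try assumption;
destruct (tet a1 b1 c1 x1 y1 z1 e) as [?|[?|[?|[?|?]]]]; try assumption;
destruct (tet x2 y2 z2 a2 b2 c2 e) as [?|[?|[?|[?|?]]]]; try assumption;
destruct (tet x3 y3 z3 a3 b3 c3 e) as [?|[?|[?|[?|?]]]]; try assumption;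
lia.
Qed.

Lemma bc (a b c x y z : Z) : 0 <= a -> 0 <= b -> 0 <= c -> 0 <= x -> 0 <= y -> 0 <= z ->
  adm a b c -> adm x y z -> b - c = y - z -> b = y /\ c = z.
Proof. unfold adm; lia. Qed.
Lemma az (a b c x : Z) : adm a b c -> adm x b c -> (b <> 0 \/ c <> 0) -> a = 0 /\ x = 0.
Proof. unfold adm; lia. Qed.

Lemma mainZ (a0 b0 c0 a1 b1 c1 a2 b2 c2 a3 b3 c3 x0 y0 z0 x1 y1 z1 x2 y2 z2 x3 y3 z3 : Z) :
  0 <= a0 -> 0 <= b0 -> 0 <= c0 -> 0 <= a1 -> 0 <= b1 -> 0 <= c1 ->
  0 <= a2 -> 0 <= b2 -> 0 <= c2 -> 0 <= a3 -> 0 <= b3 -> 0 <= c3 ->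
  0 <= x0 -> 0 <= y0 -> 0 <= z0 -> 0 <= x1 -> 0 <= y1 -> 0 <= z1 ->
  0 <= x2 -> 0 <= y2 -> 0 <= z2 -> 0 <= x3 -> 0 <= y3 -> 0 <= z3 ->
  adm a0 b0 c0 -> adm a1 b1 c1 -> adm a2 b2 c2 -> adm a3 b3 c3 ->
  adm x0 y0 z0 -> adm x1 y1 z1 -> adm x2 y2 z2 -> adm x3 y3 z3 ->
  b0 - c0 + b1 - c1 + b2 - c2 + b3 - c3 = 0 ->
  a0 - b0 + a1 - b1 - a2 + b2 - a3 + b3 = 0 ->
  y0 - z0 + y1 - z1 + y2 - z2 + y3 - z3 = 0 ->
  x0 - y0 + x1 - y1 - x2 + y2 - x3 + y3 = 0 ->
  (b0 <> 0 \/ c0 <> 0 \/ b1 <> 0 \/ c1 <> 0 \/ b2 <> 0 \/ c2 <> 0 \/ b3 <> 0 \/ c3 <> 0) ->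
  - 2 * b1 + 2 * c1 - 2 * b2 + 2 * c2 = - 2 * y1 + 2 * z1 - 2 * y2 + 2 * z2 ->
  - 2 * b0 + 2 * c0 - 2 * b2 + 2 * c2 = - 2 * y0 + 2 * z0 - 2 * y2 + 2 * z2 ->
  a1 - c1 + b2 - c2 - a3 + b3 = x1 - z1 + y2 - z2 - x3 + y3 ->
  a0 - b0 - b1 + c1 - a3 + c3 = x0 - y0 - y1 + z1 - x3 + z3 ->
  (a0 = x0 /\ b0 = y0 /\ c0 = z0 /\ a1 = x1 /\ b1 = y1 /\ c1 = z1 /\
   a2 = x2 /\ b2 = y2 /\ c2 = z2 /\ a3 = x3 /\ b3 = y3 /\ c3 = z3).
Proof.
intros.
assert (He : (b2 - c2) - (y2 - z2) = 0).
{ destruct (Z.lt_trichotomy ((b2 - c2) - (y2 - z2)) 0) as [Hl|[Hl|Hl]]; [|exact Hl|].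
  - exfalso. apply (epos x0 y0 z0 x1 y1 z1 x2 y2 z2 x3 y3 z3 a0 b0 c0 a1 b1 c1 a2 b2 c2 a3 b3 c3 ((y2 - z2) - (b2 - c2))); try assumption; lia.
  - exfalso. apply (epos a0 b0 c0 a1 b1 c1 a2 b2 c2 a3 b3 c3 x0 y0 z0 x1 y1 z1 x2 y2 z2 x3 y3 z3 ((b2 - c2) - (y2 - z2))); try assumption; lia. }
destruct (bc a0 b0 c0 x0 y0 z0) as [? ?]; try assumption; try lia.
destruct (bc a1 b1 c1 x1 y1 z1) as [? ?]; try assumption; try lia.
destruct (bc a2 b2 c2 x2 y2 z2) as [? ?]; try assumption; try lia.
destruct (bc a3 b3 c3 x3 y3 z3) as [? ?]; try assumption; try lia.
subst y0 z0 y1 z1 y2 z2 y3 z3.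
assert (x0 - a0 = x3 - a3 /\ x1 - a1 = x3 - a3 /\ x2 - a2 = x3 - a3) by lia.
assert (exists k, k = x3 - a3) as [k Hk] by eauto.
assert (HH: (a0 = 0 /\ x0 = 0) \/ (a1 = 0 /\ x1 = 0) \/ (a2 = 0 /\ x2 = 0) \/ (a3 = 0 /\ x3 = 0)).
{ match goal with Hd : _ <> 0 \/ _ |- _ => destruct Hd as [?|[?|[?|[?|[?|[?|[?|?]]]]]]];
  [left; apply (az a0 b0 c0 x0)|left; apply (az a0 b0 c0 x0)
  |right;left; apply (az a1 b1 c1 x1)|right;left; apply (az a1 b1 c1 x1)
  |right;right;left; apply (az a2 b2 c2 x2)|right;right;left; apply (az a2 b2 c2 x2)
  |right;right;right; apply (az a3 b3 c3 x3)|right;right;right; apply (az a3 b3 c3 x3)]; auto end. }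
lia.
Qed.
End ZPart.
Set Implicit Arguments. Unset Strict Implicit. Unset Printing Implicit Defensive.

Local Open Scope ring_scope.

Definition admI (a b c : int) := [|| (a==0)&&(b==0), (a==0)&&(c==0) | (b==0)&&(c==0)].

Lemma nnZ (a : int) : 0 <= a -> (0 <= Z_of_int a)%Z.
Proof. lia. Qed.
Lemma admZ (a b c : int) : admI a b c -> adm (Z_of_int a) (Z_of_int b) (Z_of_int c).
Proof. rewrite /admI /adm; lia. Qed.
Lemma zinj (a b : int) : Z_of_int a = Z_of_int b -> a = b.
Proof. lia. Qed.

Lemma mainI (a0 b0 c0 a1 b1 c1 a2 b2 c2 a3 b3 c3 x0 y0 z0 x1 y1 z1 x2 y2 z2 x3 y3 z3 : int) :
  0 <= a0 -> 0 <= b0 -> 0 <= c0 -> 0 <= a1 -> 0 <= b1 -> 0 <= c1 ->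
  0 <= a2 -> 0 <= b2 -> 0 <= c2 -> 0 <= a3 -> 0 <= b3 -> 0 <= c3 ->
  0 <= x0 -> 0 <= y0 -> 0 <= z0 -> 0 <= x1 -> 0 <= y1 -> 0 <= z1 ->
  0 <= x2 -> 0 <= y2 -> 0 <= z2 -> 0 <= x3 -> 0 <= y3 -> 0 <= z3 ->
  admI a0 b0 c0 -> admI a1 b1 c1 -> admI a2 b2 c2 -> admI a3 b3 c3 ->
  admI x0 y0 z0 -> admI x1 y1 z1 -> admI x2 y2 z2 -> admI x3 y3 z3 ->
  b0 - c0 + b1 - c1 + b2 - c2 + b3 - c3 = 0 ->
  a0 - b0 + a1 - b1 - a2 + b2 - a3 + b3 = 0 ->
  y0 - z0 + y1 - z1 + y2 - z2 + y3 - z3 = 0 ->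
  x0 - y0 + x1 - y1 - x2 + y2 - x3 + y3 = 0 ->
  [|| b0 != 0, c0 != 0, b1 != 0, c1 != 0, b2 != 0, c2 != 0, b3 != 0 | c3 != 0] ->
  - 2 * b1 + 2 * c1 - 2 * b2 + 2 * c2 = - 2 * y1 + 2 * z1 - 2 * y2 + 2 * z2 ->
  - 2 * b0 + 2 * c0 - 2 * b2 + 2 * c2 = - 2 * y0 + 2 * z0 - 2 * y2 + 2 * z2 ->
  a1 - c1 + b2 - c2 - a3 + b3 = x1 - z1 + y2 - z2 - x3 + y3 ->
  a0 - b0 - b1 + c1 - a3 + c3 = x0 - y0 - y1 + z1 - x3 + z3 ->
  [/\ [/\ a0 = x0, b0 = y0, c0 = z0 & a1 = x1], [/\ b1 = y1, c1 = z1, a2 = x2 & b2 = y2] &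
   [/\ c2 = z2, a3 = x3, b3 = y3 & c3 = z3]].
Proof.
move=> n1 n2 n3 n4 n5 n6 n7 n8 n9 n10 n11 n12 n13 n14 n15 n16 n17 n18 n19 n20 n21 n22 n23 n24
  A1 A2 A3 A4 A5 A6 A7 A8 E1 E2 E3 E4 NZ L0 L1 M0 M1.
have := mainZ _ _ _ _ _ _ _ _ _ _ _ _ _ _ _ _ _ _ _ _ _ _ _ _ (nnZ n1) (nnZ n2) (nnZ n3) (nnZ n4) (nnZ n5) (nnZ n6) (nnZ n7) (nnZ n8)
  (nnZ n9) (nnZ n10) (nnZ n11) (nnZ n12) (nnZ n13) (nnZ n14) (nnZ n15) (nnZ n16)
  (nnZ n17) (nnZ n18) (nnZ n19) (nnZ n20) (nnZ n21) (nnZ n22) (nnZ n23) (nnZ n24)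
  (admZ A1) (admZ A2) (admZ A3) (admZ A4) (admZ A5) (admZ A6) (admZ A7) (admZ A8)
  ltac:(clear -E1; lia) ltac:(clear -E2; lia) ltac:(clear -E3; lia) ltac:(clear -E4; lia)
  ltac:(clear -NZ; lia) ltac:(clear -L0; lia) ltac:(clear -L1; lia) ltac:(clear -M0; lia)
  ltac:(clear -M1; lia).
move=> [/zinj -> [/zinj -> [/zinj -> [/zinj -> [/zinj -> [/zinj -> [/zinj -> [/zinj ->
  [/zinj -> [/zinj -> [/zinj -> /zinj ->]]]]]]]]]]].
by [].
Qed.

Lemma ordI (m : nat) (Hm : (m < 12)%nat) : Ordinal Hm = inord m.
Proof. by apply/val_inj; rewrite /= inordK. Qed.
Lemma eq_inord (m n : nat) : (m < 12)%nat -> (n < 12)%nat -> (inord m == inord n :> 'I_12) = (m == n).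
Proof. by move=> Hm Hn; rewrite -val_eqE /= !inordK. Qed.

Lemma cone0 (R : realType) (N : 'rV[int]_12) (x1 x2 x3 x4 : int) :
  0 <= x1 -> 0 <= x2 -> 0 <= x3 -> 0 <= x4 ->
  q N 0 = x1 + x4 -> q N 1 = x2 + x3 -> q N 2 = x1 + x2 -> q N 3 = x3 + x4 ->
  q' N 0 = 0 -> q'' N 0 = 0 -> q' N 1 = 0 -> q'' N 1 = 0 ->
  q' N 2 = 0 -> q'' N 2 = 0 -> q' N 3 = 0 -> q'' N 3 = 0 -> in_centre_cone R N.
Proof.
move=> p1 p2 p3 p4 e0 e1 e2 e3 f0 g0 f1 g1 f2 g2 f3 g3.
exists (fun j : 'I_4 => ([:: x1; x2; x3; x4]`_j)%:~R); split.
  by case=> [[|[|[|[|m]]]] Hm] //=; rewrite ler0z.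
apply/rowP => i; rewrite !mxE summxE !big_ord_recr big_ord0 /= !mxE /=.
move: e0 e1 e2 e3 f0 g0 f1 g1 f2 g2 f3 g3; rewrite /q /q' /q'' /qI /qI' /qI''.
change (3*0)%nat with 0%nat; change (3*1)%nat with 3%nat; change (3*2)%nat with 6%nat; change (3*3)%nat with 9%nat.
change (0+1)%nat with 1%nat; change (0+2)%nat with 2%nat; change (3+1)%nat with 4%nat; change (3+2)%nat with 5%nat.
change (6+1)%nat with 7%nat; change (6+2)%nat with 8%nat; change (9+1)%nat with 10%nat; change (9+2)%nat with 11%nat.
move=> E0 E1 E2 E3 F0 G0 F1 G1 F2 G2 F3 G3.
case: i => m Hm; rewrite ordI.
do 12 (case: m Hm => [|m] Hm; [ rewrite !eq_inord //= ?E0 ?E1 ?E2 ?E3 ?F0 ?G0 ?F1 ?G1 ?F2 ?G2 ?F3 ?G3 ?intrD; ring | ]).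
by [].
Qed.

Lemma admk (N : 'rV[int]_12) (k : nat) : admissible N -> (k < 4)%nat -> admI (q N k) (q' N k) (q'' N k).
Proof. by move=> A Hk; have := A (inord k); rewrite inordK. Qed.

Theorem mainTheorem5 (R : realType) (N N' : 'rV[int]_12) :
  spun_normal_Q N -> spun_normal_Q N' ->
  ~ in_centre_cone R N ->
  beta N = beta N' ->
  N = N'.
Proof.
move=> [N0 [AN [MA MB]]] [N0' [AN' [MA' MB']]] Hc [HL0 HM0 HL1 HM1].
have NZ : [|| q' N 0 != 0, q'' N 0 != 0, q' N 1 != 0, q'' N 1 != 0,
   q' N 2 != 0, q'' N 2 != 0, q' N 3 != 0 | q'' N 3 != 0].
  apply/negPn/negP; rewrite !negb_or !negbK.
  move=> /andP[/eqP f0 /andP[/eqP g0 /andP[/eqP f1 /andP[/eqP g1 /andP[/eqP f2 /andP[/eqP g2 /andP[/eqP f3 /eqP g3]]]]]]].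
  apply: Hc.
  have p0 : 0 <= q N 0 by apply: N0.
  have p1 : 0 <= q N 1 by apply: N0.
  have p2 : 0 <= q N 2 by apply: N0.
  have p3 : 0 <= q N 3 by apply: N0.
  have [le|lt] := lerP (q N 0) (q N 2).
    apply: (@cone0 R N (q N 0) (q N 2 - q N 0) (q N 3) 0); try done; lia.
  apply: (@cone0 R N (q N 2) 0 (q N 1) (q N 0 - q N 2)); try done; lia.
have := mainI (N0 (qI 0)) (N0 (qI' 0)) (N0 (qI'' 0)) (N0 (qI 1)) (N0 (qI' 1)) (N0 (qI'' 1))
  (N0 (qI 2)) (N0 (qI' 2)) (N0 (qI'' 2)) (N0 (qI 3)) (N0 (qI' 3)) (N0 (qI'' 3))
  (N0' (qI 0)) (N0' (qI' 0)) (N0' (qI'' 0)) (N0' (qI 1)) (N0' (qI' 1)) (N0' (qI'' 1))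
  (N0' (qI 2)) (N0' (qI' 2)) (N0' (qI'' 2)) (N0' (qI 3)) (N0' (qI' 3)) (N0' (qI'' 3))
  (@admk _ 0 AN isT) (@admk _ 1 AN isT) (@admk _ 2 AN isT) (@admk _ 3 AN isT)
  (@admk _ 0 AN' isT) (@admk _ 1 AN' isT) (@admk _ 2 AN' isT) (@admk _ 3 AN' isT)
  MA MB MA' MB' NZ HL0 HL1 (oppr_inj HM0) (oppr_inj HM1).
rewrite /qI /qI' /qI''.
change (3*0)%nat with 0%nat; change (3*1)%nat with 3%nat; change (3*2)%nat with 6%nat; change (3*3)%nat with 9%nat.
change (0+1)%nat with 1%nat; change (0+2)%nat with 2%nat; change (3+1)%nat with 4%nat; change (3+2)%nat with 5%nat.
change (6+1)%nat with 7%nat; change (6+2)%nat with 8%nat; change (9+1)%nat with 10%nat; change (9+2)%nat with 11%nat.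
move=> [[E0 E1 E2 E3] [E4 E5 E6 E7] [E8 E9 E10 E11]].
apply/rowP => i; case: i => m Hm; rewrite ordI.
do 12 (case: m Hm => [|m] Hm; [ by [] | ]).
by [].
Qed.
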